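(* Let $d, N$ be positive integers and $r \ge 2$ an integer, let $\|\cdot\|$ be any norm on $\mathbb{R}^d$ with unit ball $B = \{v \in \mathbb{R}^d : \|v\| \le 1\}$, and let $V_1, \dots, V_N$ be finite subsets of $B$ with $|V_i| \ge r$ for all $i \in [N]$. Then for every $k \in [r]$ there are subsets $U_i \subseteq V_i$, $i \in [N]$, with $|U_i| = k$ for all $i$, such that \[ \max_{n \in [N]} \Big\| \sum_{i \in [n]} \Big( \sum_{v \in U_i} v - \frac{k}{|V_i|} \sum_{v \in V_i} v \Big) \Big\| \le 2d. \]
   Context: $[n] = \{1, \dots, n\}$. *)

(* Defs.v *)
From HB Require Import structures.
From mathcomp Require Import all_boot all_order all_algebra finmap.
From mathcomp Require Import reals.
Set Implicit Arguments. Unset Strict Implicit. Unset Printing Implicit Defensive.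
Import Order.TTheory GRing.Theory Num.Theory.
Local Open Scope ring_scope.

(* nrm is a norm on the real vector space 'rV[R]_d (nonnegativity follows). *)
Definition is_norm (R : realType) (d : nat) (nrm : 'rV[R]_d -> R) : Prop :=
  [/\ forall x y, nrm (x + y) <= nrm x + nrm y,
      forall (a : R) x, nrm (a *: x) = `|a| * nrm x
    & forall x, nrm x = 0 -> x = 0].

(* Main.v *)
Require Import Defs.
From HB Require Import structures.
From mathcomp Require Import all_boot all_order all_algebra finmap.
From mathcomp Require Import reals.
From mathcomp Require Import zify ring lra.
Set Implicit Arguments. Unset Strict Implicit. Unset Printing Implicit Defensive.
Import Order.TTheory GRing.Theory Num.Theory.
Local Open Scope ring_scope.

Section Aux.
Variable R : realType.

Lemma exists_min (T : finType) (S : {set T}) (f : T -> R) a0 :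
  a0 \in S -> exists2 a, a \in S & forall b, b \in S -> f a <= f b.
Proof.
move=> a0S; case: (@arg_minP _ _ _ a0 (mem S) f a0S) => a aS H.
by exists a.
Qed.

Lemma int01 (z : R) : z \is a Num.int -> 0 < z < 1 -> False.
Proof.
move=> zi /andP[z0 z1].
have := norm_intr_ge1 zi (lt0r_neq0 z0).
rewrite ger0_norm; last exact: ltW.
move=> h; have := lt_le_trans z1 h; by rewrite ltxx.
Qed.

Lemma ker_nonzero m n (M : 'M[R]_(m, n)) : (n < m)%N ->
  exists2 u : 'rV_m, u != 0 & u *m M = 0.
Proof.
move=> nm.
have : (0 < \rank (kermx M))%N.
  rewrite mxrank_ker; have := rank_leq_col M; lia.
rewrite lt0n mxrank_eq0 => /eqP Kne.
have [i Hi] : exists i, row i (kermx M) != 0.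
  apply/existsP; apply: contraT; rewrite negb_exists => /forallP H.
  suff : kermx M = 0 by move/Kne.
  apply/row_matrixP => i; rewrite row0; exact/eqP/negPn/H.
exists (row i (kermx M)) => //.
by rewrite -row_mul mulmx_ker row0.
Qed.
Lemma not_frac (z : R) : 0 <= z <= 1 -> ~~ ((0 < z) && (z < 1)) -> (z = 0) \/ (z = 1).
Proof.
move=> /andP[z0 z1]; rewrite negb_and -!leNgt => /orP[h|h].
  by left; apply/eqP; rewrite eq_le h z0.
by right; apply/eqP; rewrite eq_le h z1.
Qed.

Definition tau (xa ya : R) := if 0 < ya then (1 - xa) / ya else xa / - ya.

Lemma tau_pos (xa ya : R) : 0 < xa < 1 -> ya != 0 -> 0 < tau xa ya.
Proof.
move=> /andP[x0 x1] y0; rewrite /tau; case: ifP => yp.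
  by apply: divr_gt0 => //; lra.
apply: divr_gt0 => //; rewrite oppr_gt0 lt_neqAle y0 /= leNgt yp //.
Qed.

Lemma step_ok (xa ya t : R) : 0 < xa < 1 -> ya != 0 -> 0 <= t -> t <= tau xa ya ->
  0 <= xa + t * ya <= 1.
Proof.
move=> /andP[x0 x1] y0 t0; rewrite /tau; case: ifP => yp ht.
  have e : (1 - xa) / ya * ya = 1 - xa by rewrite divfK.
  have : t * ya <= (1 - xa) / ya * ya by rewrite ler_pM2r.
  rewrite e => h; apply/andP; split; nra.
have yn : ya < 0 by rewrite lt_neqAle y0 /= leNgt yp.
have e : xa / - ya * - ya = xa by rewrite divfK // oppr_eq0.
have : t * - ya <= xa / - ya * - ya by rewrite ler_pM2r // oppr_gt0.
rewrite e => h; apply/andP; split; nra.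
Qed.

Lemma step_hit (xa ya : R) : ya != 0 ->
  (xa + tau xa ya * ya = 0) \/ (xa + tau xa ya * ya = 1).
Proof.
move=> y0; rewrite /tau; case: ifP => yp.
  by right; rewrite divfK //; ring.
have e : xa / - ya * - ya = xa by rewrite divfK // oppr_eq0.
by left; move: e; set q := xa / - ya; lra.
Qed.
End Aux.

Section Reduce.
Variables (R : realType) (d : nat) (I G : finType) (grp : I -> G) (vec : I -> 'rV[R]_d).

Definition Fs (A : {set I}) (x : I -> R) := [set a in A | (0 < x a) && (x a < 1)].

Lemma fib_ge2 (A : {set I}) (x : I -> R) :
  (forall a, 0 <= x a <= 1) ->
  (forall h, \sum_(a in A | grp a == h) x a \is a Num.int) ->
  forall a0, a0 \in Fs A x -> (2 <= #|[set a in Fs A x | grp a == grp a0]|)%N.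
Proof.
move=> x01 xint a0 a0F.
set F := Fs A x.
rewrite leqNgt; apply/negP => lt2.
have : (0 < #|[set a in F | grp a == grp a0]|)%N.
  by apply/card_gt0P; exists a0; rewrite inE a0F eqxx.
move=> gt0.
have /cards1P [a1 Ha1] : #|[set a in F | grp a == grp a0]| == 1%N by apply/eqP; lia.
have a1F : a1 \in F.
  have : a1 \in [set a in F | grp a == grp a0] by rewrite Ha1 set11.
  by rewrite inE => /andP[].
have e1 : forall a, ((a \in A) && (grp a == grp a0)) && (a \in F) = (a == a1).
  move=> a; rewrite -[a == a1]in_set1 -Ha1 inE.
  case aF: (a \in F); rewrite ?andbF ?andbT //.
  by move: aF; rewrite inE => /andP[->].
have := xint (grp a0); rewrite (bigID (fun a => a \in F)) /= (big_pred1 a1 e1).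
set s := (X in x a1 + X) => H.
have rest : s \is a Num.int.
  apply: rpred_sum => a /andP[/andP[aA _] aF].
  have nf : ~~ ((0 < x a) && (x a < 1)) by move: aF; rewrite inE aA.
  have [->|->] := not_frac (x01 a) nf.
  - exact: rpred0.
  - exact: rpred1.
have : x a1 \is a Num.int.
  by have := rpredB H rest; rewrite addrK.
move=> /int01; apply; by move: a1F; rewrite inE => /andP[].
Qed.


Lemma count_groups (A : {set I}) (x : I -> R) :
  (forall a, 0 <= x a <= 1) ->
  (forall h, \sum_(a in A | grp a == h) x a \is a Num.int) ->
  (2 * #|[set grp a | a in Fs A x]| <= #|Fs A x|)%N.
Proof.
move=> x01 xint.
set F := Fs A x; set G' := [set grp a | a in F].
rewrite -[#|F|]sum1_card (partition_big grp (mem G')) /=; last first.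
  by move=> a aF; apply: imset_f.
rewrite mulnC -sum_nat_const; apply: leq_sum => h /imsetP[a0 a0F ->].
rewrite sum1dep_card.
have := fib_ge2 x01 xint a0F.
suff -> : #|[set a in Fs A x | grp a == grp a0]| = #|[set a | (a \in F) && (grp a == grp a0)]| by [].
by apply: eq_card => a; rewrite !inE.
Qed.

Lemma reduce (A : {set I}) (x : I -> R) :
  (forall a, 0 <= x a <= 1) ->
  (forall h, \sum_(a in A | grp a == h) x a \is a Num.int) ->
  (2 * d < #|Fs A x|)%N ->
  exists x' : I -> R, [/\ forall a, 0 <= x' a <= 1,
     forall a, a \notin Fs A x -> x' a = x a,
     \sum_(a in A) x' a *: vec a = \sum_(a in A) x a *: vec a,
     forall h, \sum_(a in A | grp a == h) x' a = \sum_(a in A | grp a == h) x a &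
     (#|Fs A x'| < #|Fs A x|)%N].
Proof.
move=> x01 xint Fbig.
have cnt := count_groups x01 xint.
set F := Fs A x in Fbig cnt *.
set G' := [set grp a | a in F] in cnt.
pose M1 : 'M[R]_(#|F|, d) := \matrix_(j, c) vec (enum_val j) 0 c.
pose M2 : 'M[R]_(#|F|, #|G'|) := \matrix_(j, c) (grp (enum_val j) == enum_val c)%:R.
have dlt : (d + #|G'| < #|F|)%N by lia.
have [u u0] := ker_nonzero (row_mx M1 M2) dlt.
rewrite mul_mx_row => /eqP; rewrite row_mx_eq0 => /andP[/eqP uM1 /eqP uM2].
pose y a := \sum_(j | enum_val j == a) u 0 j.
have yF : forall a, a \notin F -> y a = 0.
  move=> a aF; apply: big1 => j /eqP ej.
  by move: aF; rewrite -ej enum_valP.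
have yv : \sum_a y a *: vec a = 0.
  transitivity (\sum_j u 0 j *: vec (enum_val j)).
    under eq_bigr do rewrite scaler_suml.
    rewrite (exchange_big_dep xpredT) //=; apply: eq_bigr => j _.
    by rewrite (big_pred1 (enum_val j)) // => a; rewrite eq_sym.
  rewrite -[X in _ = X]uM1 mulmx_sum_row; apply: eq_bigr => j _; congr (_ *: _).
  by apply/rowP => c; rewrite !mxE.
have yg : forall h, \sum_(a | grp a == h) y a = 0.
  move=> h; transitivity (\sum_j (grp (enum_val j) == h)%:R * u 0 j).
    rewrite (exchange_big_dep xpredT) //=; apply: eq_bigr => j _.
    case: eqP => H.
      rewrite mul1r (big_pred1 (enum_val j)) // => a.
      by apply/andP/eqP => [[_ /eqP <-]|->] //; rewrite H eqxx.
    rewrite mul0r big1 // => a /andP[/eqP gh /eqP ej]; by case: H; rewrite ej.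
  case hG: (h \in G').
    have [c ec] : exists c : 'I_#|G'|, enum_val c = h.
      by exists (enum_rank_in hG h); apply: enum_rankK_in.
    have := congr1 (fun v : 'M[R]_(1, #|G'|) => v 0 c) uM2.
    rewrite !mxE => e; rewrite -[X in _ = X]e; apply: eq_bigr => j _; by rewrite !mxE ec mulrC.
  apply: big1 => j _.
  have : grp (enum_val j) \in G' by apply: imset_f; apply: enum_valP.
  by case: eqP => [->|]; rewrite ?hG // mul0r.
have [j0 uj0] : exists j, u 0 j != 0.
  apply/existsP; apply: contraT; rewrite negb_exists => /forallP H.
  move: u0; suff -> : u = 0 by rewrite eqxx.
  by apply/rowP => j; rewrite mxE; apply/eqP/negPn/H.
have yj0 : y (enum_val j0) = u 0 j0.
  rewrite /y (big_pred1 j0) // => j; apply/eqP/eqP => [/enum_val_inj|->] //.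
set a1 := enum_val j0.
have ya1 : y a1 != 0 by rewrite yj0.
have yS : forall a, y a != 0 -> a \in F.
  by move=> a; apply: contraR => /yF ->; rewrite eqxx.
have xF : forall a, a \in F -> 0 < x a < 1.
  by move=> a; rewrite inE => /andP[].
have [a2 a2S a2min] := @exists_min R I [set a | y a != 0]
   (fun a => tau (x a) (y a)) a1 ltac:(by rewrite inE).
have a2ne : y a2 != 0 by move: a2S; rewrite inE.
have a2F := yS _ a2ne.
set t := tau (x a2) (y a2).
have t0 : 0 < t := tau_pos (xF _ a2F) a2ne.
exists (fun a => x a + t * y a); split.
- move=> a /=; have [ya0|ya] := eqVneq (y a) 0.
    by rewrite ya0 mulr0 addr0.
  have ta : t <= tau (x a) (y a) by move: (a2min a); rewrite inE => /(_ ya).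
  exact: (step_ok (xF _ (yS _ ya)) ya (ltW t0) ta).
- by move=> a aF; rewrite yF // mulr0 addr0.
- under eq_bigr do rewrite scalerDl.
  rewrite big_split /=.
  suff -> : \sum_(a in A) (t * y a) *: vec a = 0 by rewrite addr0.
  under eq_bigr do rewrite -scalerA.
  rewrite -scaler_sumr.
  suff -> : \sum_(a in A) y a *: vec a = 0 by rewrite scaler0.
  rewrite -[X in _ = X]yv big_mkcond; apply: eq_bigr => a _; case: ifP => // aA.
  by rewrite yF ?scale0r // inE aA.
- move=> h; rewrite big_split /= -big_distrr /=.
  suff -> : \sum_(a in A | grp a == h) y a = 0 by rewrite mulr0 addr0.
  rewrite -[X in _ = X](yg h) big_mkcond [RHS]big_mkcond; apply: eq_bigr => a _.
  case aA: (a \in A) => //=; case: ifP => // _.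
  by rewrite yF // inE aA.
- have hit := step_hit (x a2) a2ne.
  have sub : Fs A (fun a => x a + t * y a) \subset F :\ a2.
    apply/subsetP => a; rewrite !inE => /andP[aA fr].
    have [ya0|ya] := eqVneq (y a) 0.
      rewrite ya0 mulr0 addr0 in fr; rewrite aA fr andbT.
      rewrite ?andbT; apply/eqP => e; by move: a2ne; rewrite -e ya0 eqxx.
    rewrite aA (xF _ (yS _ ya)) ?andbT.
    apply: contraTneq fr => ->; rewrite -/t.
    by case: hit => ->; rewrite ?ltxx ?andbF ?ltr01.
  apply: (leq_ltn_trans (subset_leq_card sub)).
  by rewrite [X in (_ < X)%N](cardsD1 a2) a2F.
Qed.

Lemma vertex (A : {set I}) (x0 : I -> R) :
  (forall a, 0 <= x0 a <= 1) ->
  (forall h, \sum_(a in A | grp a == h) x0 a \is a Num.int) ->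
  exists x' : I -> R, [/\ forall a, 0 <= x' a <= 1,
     forall a, a \notin Fs A x0 -> x' a = x0 a,
     \sum_(a in A) x' a *: vec a = \sum_(a in A) x0 a *: vec a,
     forall h, \sum_(a in A | grp a == h) x' a = \sum_(a in A | grp a == h) x0 a &
     (#|Fs A x'| <= 2 * d)%N].
Proof.
suff : forall n x, (#|Fs A x| <= n)%N -> (forall a, 0 <= x a <= 1) ->
  (forall h, \sum_(a in A | grp a == h) x a \is a Num.int) ->
  exists x' : I -> R, [/\ forall a, 0 <= x' a <= 1,
     forall a, a \notin Fs A x -> x' a = x a,
     \sum_(a in A) x' a *: vec a = \sum_(a in A) x a *: vec a,
     forall h, \sum_(a in A | grp a == h) x' a = \sum_(a in A | grp a == h) x a &
     (#|Fs A x'| <= 2 * d)%N].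
  by move=> H; apply: H.
elim=> [|n IH] x hn x01 xint.
  by exists x; split => //; move: hn; lia.
case: (leqP #|Fs A x| (2 * d)) => hc.
  by exists x; split.
have [x1 [x101 x1e x1v x1g x1c]] := reduce x01 xint hc.
have [|||x2 [x201 x2e x2v x2g x2c]] := IH x1 => //.
- lia.
- by move=> h; rewrite x1g.
exists x2; split => //.
- move=> a aF; rewrite -(x1e a aF); apply: x2e.
  apply: contra aF; rewrite !inE => /andP[aA fr]; rewrite aA /=.
  case: (boolP (a \in Fs A x)) => [|nF]; first by rewrite inE => /andP[].
  by rewrite -(x1e a nF).
- by rewrite x2v x1v.
- by move=> h; rewrite x2g x1g.
Qed.

End Reduce.

Section Core.
Variables (R : realType) (d N : nat) (I : finType) (grp : I -> 'I_N)
  (vec : I -> 'rV[R]_d) (nrm : 'rV[R]_d -> R).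

Lemma nrm0 : is_norm nrm -> nrm 0 = 0.
Proof. by case=> _ hZ _; rewrite -(scale0r (0 : 'rV[R]_d)) hZ normr0 mul0r. Qed.

Lemma nrm_ge0 : is_norm nrm -> forall v, 0 <= nrm v.
Proof.
move=> hn v; have [hT hZ _] := hn.
have := hT v (- v); rewrite subrr nrm0 // -scaleN1r hZ normrN normr1 mul1r.
lra.
Qed.

Lemma nrm_sum (S : {set I}) (f : I -> 'rV[R]_d) : is_norm nrm ->
  nrm (\sum_(a in S) f a) <= \sum_(a in S) nrm (f a).
Proof.
move=> hn; have [hT _ _] := hn.
elim/big_rec2: _ => [|a y1 y2 _ h]; first by rewrite nrm0.
by apply: le_trans (hT _ _) _; rewrite lerD2l.
Qed.

Lemma sumBv (S : {set I}) (e x : I -> R) :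
  \sum_(a in S) (e a - x a) *: vec a =
  \sum_(a in S) e a *: vec a - \sum_(a in S) x a *: vec a.
Proof. by rewrite -sumrB; apply: eq_bigr => a _; rewrite scalerBl. Qed.

Lemma est (S : {set I}) (x e : I -> R) : is_norm nrm ->
  (forall a, nrm (vec a) <= 1) ->
  (forall a, 0 <= x a <= 1) -> (forall a, 0 <= e a <= 1) ->
  (forall a, a \in S -> a \notin Fs S x -> e a = x a) ->
  (#|Fs S x| <= 2 * d)%N ->
  nrm (\sum_(a in S) (e a - x a) *: vec a) <= 2 * d%:R.
Proof.
move=> hn hv x01 e01 he hc.
have [_ hZ _] := hn.
have -> : \sum_(a in S) (e a - x a) *: vec a = \sum_(a in Fs S x) (e a - x a) *: vec a.
  rewrite big_mkcond [RHS]big_mkcond; apply: eq_bigr => a _.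
  case aS: (a \in S); case aF: (a \in Fs S x) => //.
  - by rewrite he ?aF // subrr scale0r.
  - by move: aF; rewrite inE aS.
apply: le_trans (nrm_sum _ _ hn) _.
apply: (@le_trans _ _ (\sum_(a in Fs S x) 1)).
  apply: ler_sum => a _; rewrite hZ.
  have : `|e a - x a| <= 1.
    have := x01 a; have := e01 a; move=> /andP[? ?] /andP[? ?].
    rewrite ler_norml; apply/andP; split; lra.
  move=> h1; have := hv a; have := nrm_ge0 hn (vec a).
  move=> h2 h3; have h4 := normr_ge0 (e a - x a); nra.
rewrite sumr_const -[2 * d%:R](natrM R 2 d) ler_nat.
by [].
Qed.

Definition An (n : nat) : {set I} := [set a | (grp a < n)%N].

Definition Inv (n : nat) (x0 x : I -> R) :=
  [/\ forall a, 0 <= x a <= 1, forall a, (n <= grp a)%N -> x a = x0 a,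
      forall h, \sum_(a | grp a == h) x a = \sum_(a | grp a == h) x0 a,
      \sum_(a in An n) x a *: vec a = \sum_(a in An n) x0 a *: vec a &
      (#|Fs (An n) x| <= 2 * d)%N].

Lemma grpsum (n : nat) (f : I -> R) h :
  \sum_(a in An n | grp a == h) f a = if (h < n)%N then \sum_(a | grp a == h) f a else 0.
Proof.
case: ifP => hn.
  apply: eq_bigl => a; rewrite inE; apply/andP/idP => [[]//|/eqP e].
  by rewrite e hn eqxx.
apply: big_pred0 => a; rewrite inE; apply/andP => -[ha /eqP e].
by move: ha; rewrite e hn.
Qed.

Lemma An_split (n : nat) (f : I -> 'rV[R]_d) :
  \sum_(a in An n.+1) f a = \sum_(a in An n) f a + \sum_(a in An n.+1 | ~~ (grp a < n)%N) f a.
Proof.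
rewrite (bigID (fun a => (grp a < n)%N)) /=; congr (_ + _).
apply: eq_bigl => a; rewrite !inE; apply/andP/idP => [[]//|h]; split => //.
by rewrite ltnS ltnW.
Qed.
Lemma claim (x0 : I -> R) : is_norm nrm -> (forall a, nrm (vec a) <= 1) ->
  (forall a, 0 <= x0 a <= 1) ->
  (forall h, \sum_(a | grp a == h) x0 a \is a Num.int) ->
  forall j n, (n + j = N)%N -> forall x, Inv n x0 x ->
  exists e : I -> R, [/\ forall a, e a = 0 \/ e a = 1,
     forall h, \sum_(a | grp a == h) e a = \sum_(a | grp a == h) x0 a,
     forall m, (n <= m <= N)%N ->
        nrm (\sum_(a in An m) (e a - x0 a) *: vec a) <= 2 * d%:R &
     forall a, a \in An n -> a \notin Fs (An n) x -> e a = x a].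
Proof.
move=> hn hv x001 x0int.
elim=> [|j IH] n.
  rewrite addn0 => -> x [x01 xe xg xv xc].
  have gs : forall (f : I -> R) h, \sum_(a in [set: I] | grp a == h) f a = \sum_(a | grp a == h) f a.
    by move=> f h; apply: eq_bigl => a; rewrite in_setT.
  have [|e [e01 ee _ eg ec]] := @vertex R 0 I _ grp (fun _ => 0) [set: I] x x01.
    by move=> h; rewrite gs xg.
  have cons : forall a, a \in An N -> a \notin Fs (An N) x -> e a = x a.
    move=> a aA aF; apply: ee; apply: contra aF.
    by move: aA; rewrite !inE => -> /andP[_ ->].
  exists e; split => //.
  - move=> a; apply: not_frac (e01 a) _.
    have : a \notin Fs [set: I] e.
      move: ec; rewrite leqn0 cards_eq0 => /eqP ->; by rewrite inE.
    by rewrite inE in_setT.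
  - by move=> h; rewrite -gs eg gs xg.
  - move=> m /andP[h1 h2]; have -> : m = N by apply/eqP; rewrite eqn_leq h1 h2.
    rewrite sumBv -xv -sumBv.
    exact: est hn hv x01 e01 cons xc.
move=> hj x [x01 xe xg xv xc].
have [|x' [x'01 x'e x'v x'g x'c]] := @vertex R d I _ grp vec (An n.+1) x x01.
  move=> h; rewrite grpsum; case: ifP => _; last exact: rpred0.
  by rewrite xg.
have x'out : forall a, (n.+1 <= grp a)%N -> x' a = x a.
  by move=> a ha; apply: x'e; rewrite !inE ltnNge ha.
have inv' : Inv n.+1 x0 x'.
  split => //.
  - by move=> a ha; rewrite x'out // xe // ltnW.
  - move=> h; case: (ltnP h n.+1) => hh.
      by have := x'g h; rewrite !grpsum hh xg.
    rewrite -xg; apply: eq_bigr => a /eqP ah; apply: x'out; by rewrite ah.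
  - rewrite x'v !An_split xv; congr (_ + _); apply: eq_bigr => a /andP[_].
    by rewrite -leqNgt => ha; rewrite xe.
have [|e [e01 eg eb ec]] := IH n.+1 _ x' inv'.
  by rewrite addSnnS.
have cons : forall a, a \in An n -> a \notin Fs (An n) x -> e a = x a.
  move=> a aA aF.
  have aA' : a \in An n.+1 by move: aA; rewrite !inE => /ltnW.
  have aF' : a \notin Fs (An n.+1) x.
    by move: aA aF aA'; rewrite !inE => -> /= h ->.
  have ex' := x'e a aF'.
  rewrite ec // -?ex' //.
  by move: aF'; rewrite !inE ex'.
exists e; split => //.
move=> m /andP[h1 h2]; case: (eqVneq m n) => [->|mn].
  rewrite sumBv -xv -sumBv.
  apply: est hn hv x01 _ cons xc.
  by move=> a; case: (e01 a) => ->; rewrite ?lexx ?ler01.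
by apply: eb; rewrite h2 andbT ltn_neqAle eq_sym mn h1.
Qed.
Lemma core_final (x0 : I -> R) : is_norm nrm -> (forall a, nrm (vec a) <= 1) ->
  (forall a, 0 <= x0 a <= 1) ->
  (forall h, \sum_(a | grp a == h) x0 a \is a Num.int) ->
  exists e : I -> R, [/\ forall a, e a = 0 \/ e a = 1,
     forall h, \sum_(a | grp a == h) e a = \sum_(a | grp a == h) x0 a &
     forall m, (m <= N)%N ->
        nrm (\sum_(a in An m) (e a - x0 a) *: vec a) <= 2 * d%:R].
Proof.
move=> hn hv x001 x0int.
have [|e [e01 eg eb _]] := claim hn hv x001 x0int (j := N) (n := 0) erefl (x := x0).
  split => //.
  suff -> : Fs (An 0) x0 = set0 by rewrite cards0.
  by apply/setP => a; rewrite !inE ltn0.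
by exists e; split.
Qed.
End Core.

Local Open Scope fset_scope.

Section Main.
Variables (R : realType) (d N : nat) (V : 'I_N -> {fset 'rV[R]_d}).

Definition SI := {i : 'I_N & V i}.

Lemma sig_sum (M : nmodType) (g : SI -> M) h :
  \sum_(p : SI | tag p == h) g p = \sum_(j : V h) g (Tagged (fun i => V i) j).
Proof.
have := @sig_big_dep M 0 +%R 'I_N (fun i => V i) (fun i => i == h) (fun i (j : V i) => true)
  (fun i (j : V i) => g (Tagged (fun i => V i) j)).
rewrite /= big_pred1_eq => ->.
by apply: eq_big => [p|[i j] _] //; rewrite andbT.
Qed.

Lemma sig_sum_lt (M : nmodType) (g : SI -> M) n :
  \sum_(i < N | (i < n)%N) \sum_(j : V i) g (Tagged (fun i => V i) j) =
  \sum_(p : SI | (tag p < n)%N) g p.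
Proof.
rewrite (sig_big_dep (fun i : 'I_N => (i < n)%N) (fun i (j : V i) => true)
  (fun i (j : V i) => g (Tagged (fun i => V i) j))).
by apply: eq_big => [p|[i j] _] //; rewrite andbT.
Qed.

End Main.

Theorem lemma5 (R : realType) (d N r : nat) (nrm : 'rV[R]_d -> R)
  (V : 'I_N -> {fset 'rV[R]_d}) :
  (0 < d)%N -> (0 < N)%N -> (2 <= r)%N ->
  is_norm nrm ->
  (forall i, forall v, v \in V i -> nrm v <= 1) ->
  (forall i, (r <= #|` V i|)%N) ->
  forall k : nat, (1 <= k <= r)%N ->
  exists U : 'I_N -> {fset 'rV[R]_d},
    (forall i, U i `<=` V i) /\ (forall i, #|` U i| = k) /\
    (forall n : nat, (1 <= n <= N)%N ->
       nrm (\sum_(i < N | (i < n)%N)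
              (\sum_(v <- U i) v
               - (k%:R / (#|` V i|)%:R) *: \sum_(v <- V i) v))
       <= 2 * d%:R).
Proof.
move=> d0 N0 r2 hn hV hr k /andP[k1 kr].
pose grp := fun p : SI V => tag p.
pose vec := fun p : SI V => val (tagged p) : 'rV[R]_d.
pose c := fun i : 'I_N => k%:R / (#|` V i|)%:R : R.
pose x0 := fun p : SI V => c (tag p).
have mpos : forall i, (0 < #|` V i|)%N by move=> i; have := hr i; lia.
have cardV : forall i, #|{: V i}| = #|` V i| by move=> i; rewrite cardfE.
have x001 : forall a, 0 <= x0 a <= 1.
  move=> a; rewrite /x0 /c; apply/andP; split.
    by apply: divr_ge0; rewrite ler0n.
  rewrite ler_pdivrMr ?ltr0n // mul1r ler_nat.
  by have := hr (tag a); lia.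
have x0sum : forall h, \sum_(a | grp a == h) x0 a = k%:R.
  move=> h; rewrite sig_sum /x0 /= sumr_const (_ : #|xpredT| = #|` V h|); last by rewrite -cardV.
  rewrite -[c h *+ _]mulr_natr /c divfK //.
  by rewrite pnatr_eq0 -lt0n.
have hv : forall a, nrm (vec a) <= 1.
  by move=> a; apply: hV; apply: valP.
have xint : forall h, \sum_(a | grp a == h) x0 a \is a Num.int.
  by move=> h; rewrite x0sum; apply: natr_int.
have [e [e01 eg eb]] := @core_final R d N (SI V) grp vec nrm x0 hn hv x001 xint.
pose E := fun i (j : V i) => e (Tagged (fun i => V i) j).
pose U := fun i => [fset v in V i | [exists j : V i, (val j == v) && (E i j == 1)]].
have sumU : forall i (M : nmodType) (F : 'rV[R]_d -> M),
    \sum_(v <- U i) F v = \sum_(j : V i | E i j == 1) F (val j).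
  move=> i M F; rewrite /U -big_fset_condE big_seq_fsetE /=.
  apply: eq_bigl => j; apply/existsP/idP => [[j' /andP[/eqP /val_inj -> //]]|Ej].
  by exists j; rewrite eqxx Ej.
have sumE : forall i (M : lmodType R) (F : 'rV[R]_d -> M),
    \sum_(j : V i | E i j == 1) F (val j) = \sum_(j : V i) E i j *: F (val j).
  move=> i M F; rewrite big_mkcond; apply: eq_bigr => j _.
  by case: (e01 (Tagged (fun i => V i) j)); rewrite /E => ->; rewrite ?eqxx ?scale1r // eq_sym oner_eq0 scale0r.
exists U; split; [|split].
- move=> i; apply/fsubsetP => v; rewrite !inE => /andP[] //.
- move=> i; apply/eqP; rewrite -(eqr_nat R) card_fset_sum1 natr_sum sumU.
  have := sumE i R^o (fun _ => 1); rewrite /= => ->.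
  have := eg i; rewrite x0sum sig_sum => <-.
  by apply/eqP; apply: eq_bigr => j _; rewrite /E /= -[RHS]mulr1.
- move=> n /andP[n1 nN].
  have := eb n nN; apply: le_trans; rewrite le_eqVlt; apply/orP; left; apply/eqP.
  congr nrm.
  have SL := sig_sum_lt (fun a => (e a - x0 a) *: vec a) n; rewrite /= in SL.
  rewrite (eq_bigl (fun p : SI V => (tag p < n)%N)); last by move=> p; rewrite inE.
  rewrite -SL; apply: eq_bigr => i _.
  rewrite (sumU i _ (fun v => v)) (sumE i _ (fun v => v)) big_seq_fsetE /= scaler_sumr -sumrB.
  by apply: eq_bigr => j _; rewrite scalerBl.
Qed.
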